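(* For every integer $n\ge0$ with $n\ne3$ we have $\tilde b(TP_n)\le 2^{n/4}$. Furthermore $\tilde b(TP_3)=2$.
   Context: The triangular path $TP_n$ is the graph with vertex set $[n]$ in which $i\ne j$ are adjacent iff $|i-j|\le2$; $TP_0$ is the empty graph. $\mathrm{Ind}(G)$ is the independence complex of $G$ (including the empty face), and $\tilde b(G)=\sum_{i\ge-1}\dim_{\mathbb{K}}\widetilde H_i(\mathrm{Ind}(G);\mathbb{K})$ for a fixed field $\mathbb{K}$. *)

(* Defs.v *)
From HB Require Import structures.
From mathcomp Require Import all_boot all_order all_algebra.
Set Implicit Arguments. Unset Strict Implicit. Unset Printing Implicit Defensive.
Import GRing.Theory Num.Theory.
Local Open Scope ring_scope.

(* A simple graph is a relation [e] on a finite vertex type [V]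
   (the graphs considered are symmetric and irreflexive). *)

(* independent sets of a graph = faces of the independence complex Ind(G),
   including the empty face *)
Definition independent (V : finType) (e : rel V) (A : {set V}) : bool :=
  [forall x in A, forall y in A, ~~ e x y].

(* faces of Ind(G) with exactly d vertices (i.e. of dimension d-1) *)
Definition faces (V : finType) (e : rel V) (d : nat) : {set {set V}} :=
  [set A : {set V} | independent e A && (#|A| == d)%N].

(* Simplicial boundary map from (d+1)-vertex faces to d-vertex faces, written
   as a matrix acting on row vectors: entry (A,B) is 0 unless B = A \ {v},
   in which case it is (-1)^(number of vertices of B below v), vertices being
   totally ordered by enum_rank. *)
Definition bdry_coef (K : fieldType) (V : finType) (A B : {set V}) : K :=
  if B \subset A then
    match [pick v in A :\: B] with
    | Some v => (-1) ^+ #|[set u in B | enum_rank u < enum_rank v]%N|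
    | None => 0
    end
  else 0.

Definition bdry (K : fieldType) (V : finType) (e : rel V) (d : nat)
  : 'M[K]_(#|faces e d.+1|, #|faces e d|) :=
  \matrix_(i, j) bdry_coef K (enum_val i) (enum_val j).

(* dim_K of the reduced homology \tilde H_{d-1}(Ind(G); K), d = number of
   vertices of the faces in that degree (d = 0 <-> degree -1, the augmented
   chain group spanned by the empty face, with zero augmentation target):
   dim ker(boundary out of C_{d-1}) - dim im(boundary into C_{d-1}). *)
Definition red_betti (K : fieldType) (V : finType) (e : rel V) (d : nat) : nat :=
  ((match d with
    | 0 => #|faces e 0|
    | d'.+1 => \rank (kermx (bdry K e d'))
    end) - \rank (bdry K e d))%N.

(* \tilde b(G) = sum over all degrees i >= -1 of dim \tilde H_i(Ind G; K);
   faces have at most #|V| vertices, so degrees i > #|V| contribute 0. *)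
Definition btilde (K : fieldType) (V : finType) (e : rel V) : nat :=
  (\sum_(d < #|V|.+2) red_betti K e d)%N.

(* The triangular path TP_n on vertex set {0,...,n-1} (a relabelling of [n]):
   i != j adjacent iff |i - j| <= 2. *)
Definition TP (n : nat) : rel 'I_n :=
  fun i j => [&& i != j, (i <= j + 2)%N & (j <= i + 2)%N].
Arguments TP n : clear implicits.

(* Main.v *)
Require Import Defs.
From mathcomp Require Import all_boot all_order all_algebra.
From mathcomp Require Import zify ring.
Set Implicit Arguments. Unset Strict Implicit. Unset Printing Implicit Defensive.
Import GRing.Theory Num.Theory.

Section Big.
Local Open Scope ring_scope.
Variable K : fieldType.
Variable V : finType.
Local Notation T := {set V}.
Local Notation N := #|{set V}|.

Definition bigmx (f : T -> T -> K) : 'M[K]_N :=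
  \matrix_(i, j) f (enum_val i) (enum_val j).

Lemma sumT (F : T -> K) : \sum_(i < N) F (enum_val i) = \sum_(X : T) F X.
Proof. by rewrite -(big_enum_val (A := predT)). Qed.

Lemma bigmx_mul f g :
  bigmx f *m bigmx g = bigmx (fun X Z => \sum_(Y : T) f X Y * g Y Z).
Proof.
apply/matrixP => i j; rewrite !mxE.
rewrite -(sumT (fun Y => f (enum_val i) Y * g Y (enum_val j))).
by apply: eq_bigr => k _; rewrite !mxE.
Qed.

Lemma bigmx_ext f g : (forall X Y, f X Y = g X Y) -> bigmx f = bigmx g.
Proof. by move=> H; apply/matrixP => i j; rewrite !mxE H. Qed.

Lemma sum_ind (X0 : T) (F : T -> K) :
  \sum_(Y : T) (if Y == X0 then F Y else 0) = F X0.
Proof. by rewrite -big_mkcond big_pred1_eq. Qed.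

Lemma sum_ind' (X0 : T) (F : T -> K) :
  \sum_(Y : T) (if X0 == Y then F Y else 0) = F X0.
Proof.
rewrite -(sum_ind X0 F); apply: eq_bigr => Y _; by rewrite eq_sym.
Qed.

Lemma sgn_sq (a : nat) : (-1) ^+ a * (-1) ^+ a = 1 :> K.
Proof. by rewrite -exprD addnn -mul2n exprM sqrrN expr1n expr1n. Qed.

End Big.

Section Emb.
Local Open Scope ring_scope.
Variable K : fieldType.
Variable V : finType.
Local Notation T := {set V}.
Local Notation N := #|{set V}|.

Definition Emb (F : {set T}) : 'M[K]_(#|F|, N) :=
  \matrix_(i, j) ((enum_val i == enum_val j)%:R).

Lemma sumF (F : {set T}) (G : T -> K) :
  \sum_(i < #|F|) G (enum_val i) = \sum_(X : T) (if X \in F then G X else 0).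
Proof. by rewrite -big_enum_val big_mkcond. Qed.

Lemma sum_selr (F : {set T}) (G : T -> K) Z :
  \sum_(X : T) (if X \in F then G X * (X == Z)%:R else 0) =
  if Z \in F then G Z else 0.
Proof.
rewrite (bigD1 Z) //= eqxx mulr1 big1 ?addr0 //.
by move=> Y /negPf ->; case: (Y \in F); rewrite ?mulr0.
Qed.

Lemma sum_sell (F : {set T}) (G : T -> K) Z :
  \sum_(X : T) (if X \in F then (X == Z)%:R * G X else 0) =
  if Z \in F then G Z else 0.
Proof.
rewrite -sum_selr; apply: eq_bigr => X _; by rewrite mulrC.
Qed.

Lemma Emb_conj (F1 F0 : {set T}) (M : 'M[K]_(#|F1|, #|F0|)) h :
  (forall l k, M l k = h (enum_val l) (enum_val k)) ->
  (Emb F1)^T *m M *m Emb F0 =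
  bigmx (fun X Y => if (X \in F1) && (Y \in F0) then h X Y else 0).
Proof.
move=> HM; apply/matrixP => i j; rewrite !mxE.
under eq_bigr => k _ do rewrite !mxE.
under eq_bigr => k _ do under eq_bigr => l _ do rewrite !mxE HM.
rewrite (sumF F0 (fun Y => (\sum_(j0 < #|F1|)
   (enum_val j0 == enum_val i)%:R * h (enum_val j0) Y) *
     (Y == enum_val j)%:R)).
under eq_bigr => Y _ do rewrite (sumF F1 (fun Z => (Z == enum_val i)%:R * h Z Y)) sum_sell.
rewrite sum_selr.
by case: (enum_val j \in F0); case: (enum_val i \in F1).
Qed.

Lemma Emb_id (F : {set T}) : Emb F *m (Emb F)^T = 1%:M.
Proof.
apply/matrixP => i j; rewrite !mxE.
under eq_bigr => k _ do rewrite !mxE.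
rewrite (sumT (fun X => (enum_val i == X)%:R * (enum_val j == X)%:R)).
rewrite (bigD1 (enum_val i)) //= big1 ?addr0; last first.
  by move=> Y; rewrite eq_sym => /negPf ->; rewrite mul0r.
rewrite eqxx mul1r (inj_eq enum_val_inj).
by rewrite eq_sym.
Qed.

Lemma rank_conj (F1 F0 : {set T}) (M : 'M[K]_(#|F1|, #|F0|)) :
  \rank ((Emb F1)^T *m M *m Emb F0) = \rank M.
Proof.
apply/eqP; rewrite eqn_leq; apply/andP; split.
  apply: leq_trans; [exact: mxrankM_maxl | ]. exact: mxrankM_maxr.
have HM : M = Emb F1 *m ((Emb F1)^T *m M *m Emb F0) *m (Emb F0)^T.
  by rewrite !mulmxA Emb_id mul1mx -mulmxA Emb_id mulmx1.
rewrite {1}HM.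
apply: leq_trans; [exact: mxrankM_maxl | exact: mxrankM_maxr].
Qed.
End Emb.

Section Graph.
Local Open Scope ring_scope.
Variable K : fieldType.
Variable V : finType.
Variable e : rel V.
Local Notation T := {set V}.

Definition facesW (W : {set V}) (d : nat) : {set T} :=
  [set A : T | [&& A \subset W, independent e A & #|A| == d]].

Definition BD (W : {set V}) (d : nat) : 'M[K]_#|T| :=
  bigmx (fun A B => if (A \in facesW W d.+1) && (B \in facesW W d)
                    then bdry_coef K A B else 0).

Definition cW W d := #|facesW W d|.
Definition rk W d := \rank (BD W d).
Definition term W d :=
  (cW W d - (if d is d'.+1 then rk W d' else 0) - rk W d)%N.
Definition bW W := (\sum_(d < #|V|.+2) term W d)%N.

Lemma facesT d A : (A \in faces e d) = (A \in facesW setT d).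
Proof. by rewrite !inE subsetT. Qed.

Lemma rank_bdry d : \rank (bdry K e d) = rk setT d.
Proof.
rewrite -rank_conj (Emb_conj (h := @bdry_coef K V)); last by move=> l k; rewrite mxE.
rewrite /rk /BD; congr (\rank _); apply: bigmx_ext => X Y.
by rewrite !facesT.
Qed.

Lemma card_faces d : #|faces e d| = cW setT d.
Proof. by apply: eq_card => A; rewrite facesT. Qed.

Lemma btilde_bW : btilde K e = bW setT.
Proof.
rewrite /btilde /bW; apply: eq_bigr => [[d _]] _ /=.
rewrite /red_betti /term; case: d => [|d].
  by rewrite rank_bdry card_faces subn0.
by rewrite mxrank_ker !rank_bdry !card_faces.
Qed.

End Graph.

Section Comb.
Local Open Scope ring_scope.
Variable K : fieldType.
Variable V : finType.
Implicit Types (X Y A : {set V}) (u v : V).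

Lemma card_sepU1 (P : pred V) u Y : u \notin Y ->
  #|[set x in u |: Y | P x]| = (P u + #|[set x in Y | P x]|)%N.
Proof.
move=> uY; case Pu: (P u).
  have -> : [set x in u |: Y | P x] = u |: [set x in Y | P x].
    apply/setP => x; rewrite !inE; case: eqP => [->|] //=; by rewrite Pu.
  by rewrite cardsU1 inE (negPf uY).
have -> : [set x in u |: Y | P x] = [set x in Y | P x].
  apply/setP => x; rewrite !inE; case: eqP => [->|] //=; by rewrite Pu andbF.
by [].
Qed.

Lemma coef_nsub X Y : ~~ (Y \subset X) -> bdry_coef K X Y = 0.
Proof. by rewrite /bdry_coef => /negPf ->. Qed.

Lemma coef_single X Y u : Y \subset X -> X :\: Y = [set u] ->
  bdry_coef K X Y = (-1) ^+ #|[set x in Y | enum_rank x < enum_rank u]%N|.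
Proof.
move=> sYX hD; rewrite /bdry_coef sYX.
case: pickP => [w|H]; last by have := H u; rewrite hD inE eqxx.
by rewrite hD inE => /eqP ->.
Qed.

Definition sg v X : K := (-1) ^+ #|[set x in X | enum_rank v < enum_rank x]%N|.

Lemma sgn_eq (a b c : nat) :
  (-1) ^+ (a + b)%N = (-1) ^+ (a + c)%N * (-1) ^+ c * (-1) ^+ b :> K.
Proof. by rewrite !exprD -!mulrA (mulrA ((-1) ^+ c)) (sgn_sq K c) mul1r. Qed.

Lemma coefU1 v X Y : v \notin X -> v \notin Y -> #|X| = #|Y|.+1 ->
  bdry_coef K (v |: X) (v |: Y) = sg v X * sg v Y * bdry_coef K X Y.
Proof.
move=> vX vY hc; have [sYX|nYX] := boolP (Y \subset X); last first.
  rewrite !coef_nsub ?mulr0 //; apply: contra nYX => /subsetP H.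
  apply/subsetP => y yY; have := H y; rewrite !inE yY orbT => /(_ isT).
  by case/orP => // /eqP hy; rewrite -hy yY in vY.
have : #|X :\: Y| == 1%N by rewrite cardsD (setIidPr sYX) hc subSnn.
case/cards1P => u hD.
have uX : u \in X by have := set11 u; rewrite -hD => /setDP[].
have uY : u \notin Y by have := set11 u; rewrite -hD => /setDP[].
have hX : X = u |: Y.
  apply/setP => x; rewrite !inE; case: eqP => [->|/eqP xu] //=.
  case xY: (x \in Y); first by rewrite (subsetP sYX).
  apply/negP => xX; have : x \in X :\: Y by rewrite inE xY.
  by rewrite hD inE (negPf xu).
have hD' : (v |: X) :\: (v |: Y) = [set u].
  rewrite -hD; apply/setP => x; rewrite !inE; case: eqP => //= ->.
  by rewrite (negPf vX) andbF.
rewrite (coef_single _ hD') ?setUS // (coef_single sYX hD).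
have uv : u != v by apply/eqP => uv; rewrite -uv uX in vX.
have vuY : u \notin v |: Y by rewrite !inE negb_or uv uY.
rewrite /sg hX !card_sepU1 //.
exact: sgn_eq.
Qed.

Lemma coef_cone v X : v \notin X ->
  bdry_coef K (v |: X) X = (-1) ^+ #|[set x in X | enum_rank x < enum_rank v]%N|.
Proof.
move=> vX; apply: coef_single; first exact: subsetUr.
apply/setP => x; rewrite !inE; case: eqP => [->|] /=; first by rewrite (negPf vX).
by move=> _; rewrite andNb.
Qed.

End Comb.

Section Faces.
Local Open Scope ring_scope.
Variable V : finType.
Variable e : rel V.
Implicit Types (W X Y A : {set V}) (u v : V).

Lemma independentP A :
  reflect (forall x y, x \in A -> y \in A -> ~~ e x y) (independent e A).
Proof.
apply: (iffP forall_inP) => [H x y xA yA | H x xA].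
  by have /forall_inP := H x xA; apply.
by apply/forall_inP => y yA; exact: H.
Qed.

Definition nbh W v := [set x in W | [&& x != v, ~~ e v x & ~~ e x v]].

Lemma faceD1 W v d A :
  (A \in facesW e (W :\ v) d) = (v \notin A) && (A \in facesW e W d).
Proof.
rewrite !inE subsetD1.
by case: (A \subset W); case: (v \in A); rewrite ?andbF.
Qed.

Lemma faces_nbh W v d X : X \in facesW e (nbh W v) d -> v \notin X.
Proof.
rewrite inE => /and3P[/subsetP H _ _]; apply/negP => /H.
by rewrite inE eqxx /= andbF.
Qed.

Lemma faceU1 W v d X : v \in W -> ~~ e v v -> v \notin X ->
  (v |: X \in facesW e W d.+1) = (X \in facesW e (nbh W v) d).
Proof.
move=> vW evv vX; rewrite !inE cardsU1 vX add1n eqSS.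
case: (#|X| == d); rewrite ?andbF ?andbT //.
rewrite subUset sub1set vW /=.
apply/andP/andP => [[sXW /independentP H]|[/subsetP sXN /independentP H]].
  split.
    apply/subsetP => x xX; rewrite inE (subsetP sXW) //=.
    apply/and3P; split; last 2 first.
    - by apply: H; rewrite !inE ?xX ?eqxx ?orbT.
    - by apply: H; rewrite !inE ?xX ?eqxx ?orbT.
    by apply/eqP => xv; rewrite -xv xX in vX.
  by apply/independentP => x y xX yX; apply: H; rewrite inE ?xX ?yX orbT.
split.
  by apply/subsetP => x /sXN; rewrite inE => /andP[].
apply/independentP => x y; rewrite !inE.
case/orP => [/eqP->|xX]; case/orP => [/eqP->|yX] //.
- by have := sXN y yX; rewrite inE => /and4P[].
- by have := sXN x xX; rewrite inE => /and4P[].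
- exact: H.
Qed.

Lemma facesU W v d : v \in W -> ~~ e v v ->
  facesW e W d.+1 =
  facesW e (W :\ v) d.+1 :|: [set v |: X | X in facesW e (nbh W v) d].
Proof.
move=> vW evv; apply/setP => A; rewrite in_setU faceD1.
case vA: (v \in A) => /=.
  apply/idP/imsetP => [HA|[X HX ->]].
    exists (A :\ v); last by rewrite setD1K.
    by rewrite -faceU1 ?setD11 // setD1K.
  by rewrite faceU1 // (faces_nbh HX).
case: (A \in facesW e W d.+1) => //=; apply/esym/negbTE.
apply/imsetP => [[X _ hA]]; by rewrite hA setU11 in vA.
Qed.

Lemma cW_split W v d : v \in W -> ~~ e v v ->
  cW e W d.+1 = (cW e (W :\ v) d.+1 + cW e (nbh W v) d)%N.
Proof.
move=> vW evv; rewrite /cW (facesU d vW evv) cardsU.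
have -> : facesW e (W :\ v) d.+1 :&: [set v |: X | X in facesW e (nbh W v) d] = set0.
  apply/setP => A; rewrite in_setI faceD1 in_set0; apply/negbTE.
  apply/andP => [[/andP[vA _] /imsetP[X _ hA]]].
  by rewrite hA setU11 in vA.
rewrite cards0 subn0 card_in_imset //.
move=> X Y HX HY hXY.
by rewrite -(setU1K (faces_nbh HX)) hXY setU1K // (faces_nbh HY).
Qed.

Lemma faces0 W : facesW e W 0 = [set set0].
Proof.
apply/setP => A; rewrite !inE cards_eq0.
case: eqP => [->|_] /=; last by rewrite !andbF.
rewrite sub0set andbT /=; apply/independentP => x y; by rewrite inE.
Qed.

Lemma cW0 W : cW e W 0 = 1%N.
Proof. by rewrite /cW faces0 cards1. Qed.

End Faces.

Section Rank.
Local Open Scope ring_scope.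
Variable K : fieldType.
Variable V : finType.
Variable e : rel V.
Local Notation T := {set V}.
Implicit Types (W X Y A : {set V}) (u v : V).

Lemma sum_selL (t : T) (c g : T -> K) :
  \sum_(A : T) (if A == t then c A else 0) * g A = c t * g t.
Proof.
rewrite -(sum_ind t (fun A => c A * g A)); apply: eq_bigr => A _.
by case: eqP; rewrite ?mul0r.
Qed.

Lemma sum_selR (t : T) (c g : T -> K) :
  \sum_(A : T) g A * (if A == t then c A else 0) = g t * c t.
Proof.
rewrite -(sum_ind t (fun A => g A * c A)); apply: eq_bigr => A _.
by case: eqP; rewrite ?mulr0.
Qed.

Definition fBD W d (A B : T) : K :=
  if (A \in facesW e W d.+1) && (B \in facesW e W d) then bdry_coef K A B else 0.

Definition Delta v : 'M[K]_#|T| :=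
  bigmx (fun A B => if B == A then (if v \in B then 0 else 1) else 0).
Definition Pi v : 'M[K]_#|T| :=
  bigmx (fun A B => if A == B then (if v \in A then 1 else 0) else 0).
Definition Q1 v : 'M[K]_#|T| :=
  bigmx (fun X A => if A == v |: X then (if v \in X then 0 else sg K v X) else 0).
Definition Q2 v : 'M[K]_#|T| :=
  bigmx (fun B Y => if B == v |: Y then (if v \in Y then 0 else sg K v Y) else 0).

Lemma BD_del W v d : BD K e (W :\ v) d = Delta v *m BD K e W d.
Proof.
rewrite /BD /Delta bigmx_mul; apply: bigmx_ext => X Z.
rewrite (sum_selL X (fun B => if v \in B then 0 else 1)
   (fun B => if (B \in facesW e W d.+1) && (Z \in facesW e W d) then bdry_coef K B Z else 0)).
rewrite !faceD1.
case vX: (v \in X) => /=; first by rewrite mul0r.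
rewrite mul1r; case vZ: (v \in Z) => /=; last by [].
rewrite andbF; case: ifP => // _; rewrite coef_nsub //.
by apply/negP => /subsetP /(_ v vZ); rewrite vX.
Qed.

Lemma BD_del_Pi W v d : BD K e (W :\ v) d *m Pi v = 0.
Proof.
rewrite /BD /Pi bigmx_mul; apply/matrixP => i j; rewrite mxE [RHS]mxE.
set X := enum_val i; set Z := enum_val j.
rewrite (sum_selR Z (fun B => if v \in B then 1 else 0)
   (fun B => if (X \in facesW e (W :\ v) d.+1) && (B \in facesW e (W :\ v) d) then bdry_coef K X B else 0)).
rewrite faceD1; case: (v \in Z); rewrite ?mulr0 //.
by rewrite andbF mul0r.
Qed.

Lemma BD_nbh W v d : v \in W -> ~~ e v v ->
  BD K e (nbh e W v) d = Q1 v *m (BD K e W d.+1 *m Pi v) *m Q2 v.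
Proof.
move=> vW evv.
rewrite /BD /Pi /Q1 /Q2 !bigmx_mul; apply: bigmx_ext => X Y.
rewrite (sum_selR (v |: Y) (fun _ => if v \in Y then 0 else sg K v Y)).
rewrite (sum_selL (v |: X) (fun _ => if v \in X then 0 else sg K v X)).
rewrite (sum_selR (v |: Y) (fun B => if v \in B then 1 else 0)).
rewrite setU11 mulr1.
case vX: (v \in X).
  rewrite mul0r mul0r; case: ifP => // /andP[/faces_nbh]; by rewrite vX.
case vY: (v \in Y).
  rewrite mulr0; case: ifP => // /andP[_ /faces_nbh]; by rewrite vY.
rewrite !faceU1 ?vX ?vY //.
case HX: (X \in facesW e (nbh e W v) d.+1); case HY: (Y \in facesW e (nbh e W v) d) => /=;
  rewrite ?mulr0 ?mul0r //.
rewrite coefU1 ?vX ?vY //; last first.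
  by move: HX HY; rewrite !inE => /and3P[_ _ /eqP->] /and3P[_ _ /eqP->].
rewrite /sg !mulrA (sgn_sq K) mul1r -mulrA [bdry_coef K X Y * _]mulrC mulrA (sgn_sq K) mul1r.
done.
Qed.

Lemma rk_split W v d : v \in W -> ~~ e v v ->
  (rk K e (W :\ v) d.+1 + rk K e (nbh e W v) d <= rk K e W d.+1)%N.
Proof.
move=> vW evv; rewrite /rk.
rewrite -(mxrank_mul_ker (BD K e W d.+1) (Pi v)) addnC.
apply: leq_add.
  rewrite BD_nbh //.
  apply: leq_trans; [exact: mxrankM_maxl | exact: mxrankM_maxr].
rewrite BD_del; apply: mxrankS; rewrite sub_capmx submxMl /=.
by apply/sub_kermxP; rewrite -BD_del BD_del_Pi.
Qed.

Lemma rk_del W v d : (rk K e (W :\ v) d <= rk K e W d)%N.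
Proof. by rewrite /rk BD_del; exact: mxrankM_maxr. Qed.

End Rank.

Section Cone.
Local Open Scope ring_scope.
Variable K : fieldType.
Variable V : finType.
Variable e : rel V.
Local Notation T := {set V}.
Implicit Types (W X Y A : {set V}) (u v : V).

Lemma sumR (G : 'I_#|T| -> K) : \sum_(i < #|T|) G i = \sum_(X : T) G (enum_rank X).
Proof.
rewrite (reindex (@enum_rank T)) //.
by exists enum_val => x _; [exact: enum_rankK | exact: enum_valK].
Qed.

Definition sc v X : K := (-1) ^+ #|[set x in X | enum_rank x < enum_rank v]%N|.

Lemma rk_cone W v d : v \in W -> ~~ e v v -> nbh e W v = W :\ v ->
  (cW e (W :\ v) d <= rk K e W d)%N.
Proof.
move=> vW evv hN.
set F := facesW e (W :\ v) d.
pose P : 'M[K]_(#|F|, #|T|) :=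
  \matrix_(i, j) (if enum_val j == v |: enum_val i then sc v (enum_val i) else 0).
pose Q : 'M[K]_(#|T|, #|F|) :=
  \matrix_(i, j) (if enum_val i == enum_val j then 1 else 0).
have HPQ : P *m BD K e W d *m Q = 1%:M.
  apply/matrixP => i j; rewrite !mxE.
  under eq_bigr => k _ do rewrite !mxE.
  under eq_bigr => k _ do under eq_bigr => l _ do rewrite !mxE.
  rewrite sumR.
  under eq_bigr => B _ do rewrite sumR.
  under eq_bigr => B _ do under eq_bigr => A _ do rewrite !enum_rankK.
  under eq_bigr => B _ do rewrite enum_rankK.
  rewrite (sum_selR (enum_val j) (fun _ => 1)) mulr1.
  rewrite (sum_selL (v |: enum_val i) (fun _ => sc v (enum_val i))).
  rewrite -(inj_eq enum_val_inj).
  have := enum_valP i; have := enum_valP j.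
  move: (enum_val i) (enum_val j) => X Y; rewrite /F !faceD1 => /andP[vY HY] /andP[vX HX].
  rewrite faceU1 // hN faceD1 vX HX HY /=.
  have [<-|nXY] := eqVneq X Y.
    by rewrite coef_cone // /sc (sgn_sq K).
  rewrite coef_nsub ?mulr0 //; apply: contra nXY => sYX.
  rewrite eq_sym eqEcard; apply/andP; split.
    apply/subsetP => y yY; have := subsetP sYX y yY; rewrite !inE.
    by case/orP => // /eqP hy; rewrite -hy yY in vY.
  by move: HX HY; rewrite !inE => /and3P[_ _ /eqP->] /and3P[_ _ /eqP->].
rewrite /cW /rk -/F -(mxrank1 K #|F|) -HPQ.
apply: leq_trans; [exact: mxrankM_maxl | exact: mxrankM_maxr].
Qed.
End Cone.

Section BW.
Variable K : fieldType.
Variable V : finType.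
Variable e : rel V.
Implicit Types (W X Y A : {set V}) (u v : V).

Local Notation cW := (cW e).
Local Notation rk := (rk K e).
Local Notation term := (term K e).
Local Notation bW := (bW K e).

Lemma term_split W v d : v \in W -> ~~ e v v ->
  term W d <= term (W :\ v) d + (if d is d'.+1 then term (nbh e W v) d' else 0).
Proof.
move=> vW evv; rewrite /term.
case: d => [|d].
  have := rk_del K e W v 0; rewrite !cW0; lia.
rewrite (cW_split d vW evv).
have H1 := rk_split K d vW evv.
case: d H1 => [|d] H1.
  have := rk_del K e W v 0; lia.
have H2 := rk_split K d vW evv.
lia.
Qed.

Lemma sum_shift (f : nat -> nat) n :
  \sum_(d < n.+1) (if (d : nat) is d'.+1 then f d' else 0) = \sum_(d < n) f d.
Proof. by rewrite big_ord_recl /=. Qed.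

Lemma bW_split W v : v \in W -> ~~ e v v ->
  bW W <= bW (W :\ v) + bW (nbh e W v).
Proof.
move=> vW evv; rewrite /bW.
apply: leq_trans (_ : \sum_(d < #|V|.+2) (term (W :\ v) d +
   (if (d : nat) is d'.+1 then term (nbh e W v) d' else 0)) <= _).
  by apply: leq_sum => d _; apply: term_split.
rewrite big_split /= leq_add2l sum_shift [X in _ <= X]big_ord_recr /=.
exact: leq_addr.
Qed.

Lemma bW_cone W v : v \in W -> ~~ e v v -> nbh e W v = W :\ v -> bW W = 0.
Proof.
move=> vW evv hN; rewrite /bW big1 // => [[d _]] _ /=.
rewrite /term; case: d => [|d].
  have := rk_cone K 0 vW evv hN; rewrite !cW0; lia.
rewrite (cW_split d vW evv) hN.
have := rk_cone K d vW evv hN; have := rk_cone K d.+1 vW evv hN; lia.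
Qed.

Lemma cW_set0 d : cW set0 d.+1 = 0.
Proof.
rewrite /cW; apply/eqP; rewrite cards_eq0; apply/eqP/setP => A; rewrite !inE.
apply/negbTE; apply/negP => /and3P[sA _ /eqP hA].
by move: sA; rewrite subset0 => /eqP hA0; rewrite hA0 cards0 in hA.
Qed.

Lemma bW_set0 : bW set0 <= 1.
Proof.
rewrite /bW big_ord_recl /= big1 ?addn0.
  by rewrite /term cW0; lia.
by move=> i _; rewrite /term /bump /= cW_set0.
Qed.

End BW.

Section TPsec.
Variable K : fieldType.
Variable n : nat.

Definition Wk k : {set 'I_n} := [set i : 'I_n | k <= i].
Definition Bk k := bW K (TP n) (Wk k).

Lemma TPirr (v : 'I_n) : ~~ TP n v v.
Proof. by rewrite /TP eqxx. Qed.

Ltac setsolve := apply/setP; let x := fresh "x" in intro x; move: (ltn_ord x) => ?;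
  rewrite !inE /TP -?val_eqE /=; lia.

Lemma Bk_empty k : n <= k -> Bk k <= 1.
Proof.
move=> hk; rewrite /Bk (_ : Wk k = set0); first exact: bW_set0.
setsolve.
Qed.

Lemma Bk_one k : k.+1 = n -> Bk k = 0.
Proof.
move=> hk; have hk' : k < n by lia.
pose v := Ordinal hk'.
apply: (@bW_cone K _ _ _ v); first by rewrite inE.
  exact: TPirr.
setsolve.
Qed.

Lemma Bk_rec1 k : k < n -> Bk k <= Bk k.+1 + Bk (k + 3).
Proof.
move=> hk; pose v := Ordinal hk.
have := @bW_split K _ (TP n) (Wk k) v; rewrite inE leqnn TPirr => /(_ isT isT).
rewrite /Bk (_ : Wk k :\ v = Wk k.+1); last by setsolve.
by rewrite (_ : nbh (TP n) (Wk k) v = Wk (k + 3)); last by setsolve.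
Qed.

Lemma Bk_rec2 k : k + 3 < n -> Bk k <= Bk (k + 4) + Bk (k + 5).
Proof.
move=> hk.
have h0 : k < n by lia. have h1 : k + 1 < n by lia. have h2 : k + 2 < n by lia.
pose v0 := Ordinal h0; pose v1 := Ordinal h1; pose v2 := Ordinal h2;
pose v3 := Ordinal hk.
have S1 := @bW_split K _ (TP n) (Wk k) v2.
rewrite inE /= TPirr (_ : nbh (TP n) (Wk k) v2 = Wk (k + 5)) in S1; last by setsolve.
have {S1} S1 := S1 (ltac:(lia)) isT.
set H := Wk k :\ v2 in S1.
have S2 := @bW_split K _ (TP n) H v3.
rewrite !inE -?val_eqE /= TPirr in S2.
have {S2} S2 := S2 (ltac:(lia)) isT.
have C1 : bW K (TP n) (nbh (TP n) H v3) = 0.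
  apply: (@bW_cone K _ _ _ v0).
  - by rewrite !inE /TP -?val_eqE /=; lia.
  - exact: TPirr.
  - setsolve.
set H' := H :\ v3 in S2.
have S3 := @bW_split K _ (TP n) H' v0.
rewrite !inE -?val_eqE /= TPirr in S3.
have {S3} S3 := S3 (ltac:(lia)) isT.
have C2 : bW K (TP n) (H' :\ v0) = 0.
  apply: (@bW_cone K _ _ _ v1).
  - by rewrite !inE /TP -?val_eqE /=; lia.
  - exact: TPirr.
  - setsolve.
rewrite (_ : nbh (TP n) H' v0 = Wk (k + 4)) in S3; last by setsolve.
rewrite /Bk; apply: leq_trans S1 _; rewrite leq_add2r; rewrite C1 addn0 in S2; rewrite C2 add0n in S3; exact: leq_trans S2 S3.
Qed.

End TPsec.

Lemma pm0e (y t : nat) : 8*((y+t)*(y+t)*(y+t)*(y+t) + y*y*y*y) =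
  (y+t+y)*(y+t+y)*(y+t+y)*(y+t+y) + (24*y*y*t*t + 24*y*t*t*t + 7*t*t*t*t).
Proof. ring. Qed.

Lemma exp4 (x : nat) : x ^ 4 = x * x * x * x.
Proof. by rewrite !expnS expn0 muln1 !mulnA. Qed.

Lemma pm (x y : nat) : (x + y) ^ 4 <= 8 * (x ^ 4 + y ^ 4).
Proof.
rewrite !exp4.
wlog le: x y / y <= x.
  move=> Hw; case: (leqP y x) => h; first exact: Hw.
  rewrite (addnC x y) (addnC (x*x*x*x)); apply: Hw; exact: ltnW.
rewrite -(subnK le); move: (x - y) => t.
rewrite (addnC t y) pm0e; exact: leq_addr.
Qed.

Section Arith.
Variable K : fieldType.
Variable n : nat.
Local Notation Bk := (Bk K n).

Lemma b0 k : k = n -> Bk k <= 1.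
Proof. by move=> ->; apply: Bk_empty. Qed.
Lemma b1 k : k + 1 = n -> Bk k = 0.
Proof. move=> h; apply: Bk_one; lia. Qed.
Lemma b2 k : k + 2 = n -> Bk k <= 2 - 1.
Proof.
move=> h; have := Bk_rec1 K (_ : k < n); have := b1 (_ : k.+1 + 1 = n);
have := Bk_empty K (_ : n <= k + 3); lia.
Qed.
Lemma b3 k : k + 3 = n -> Bk k <= 2.
Proof.
move=> h; have := Bk_rec1 K (_ : k < n); have := b2 (_ : k.+1 + 2 = n);
have := b0 (_ : k + 3 = n); lia.
Qed.
Lemma b4 k : k + 4 = n -> Bk k <= 2.
Proof.
move=> h; have := Bk_rec2 K (_ : k + 3 < n); have := b0 (_ : k + 4 = n);
have := Bk_empty K (_ : n <= k + 5); lia.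
Qed.
Lemma b5 k : k + 5 = n -> Bk k <= 1.
Proof.
move=> h; have := Bk_rec2 K (_ : k + 3 < n); have := b1 (_ : k + 4 + 1 = n);
have := b0 (_ : k + 5 = n); lia.
Qed.
Lemma b6 k : k + 6 = n -> Bk k <= 1.
Proof.
move=> h; have := Bk_rec2 K (_ : k + 3 < n); have := b2 (_ : k + 4 + 2 = n);
have := b1 (_ : k + 5 + 1 = n); lia.
Qed.
Lemma b7 k : k + 7 = n -> Bk k <= 3.
Proof.
move=> h; have := Bk_rec2 K (_ : k + 3 < n); have := b3 (_ : k + 4 + 3 = n);
have := b2 (_ : k + 5 + 2 = n); lia.
Qed.
Lemma b8 k : k + 8 = n -> Bk k <= 4.
Proof.
move=> h; have := Bk_rec2 K (_ : k + 3 < n); have := b4 (_ : k + 4 + 4 = n);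
have := b3 (_ : k + 5 + 3 = n); lia.
Qed.

Lemma pow_bound (b t m : nat) : b <= t -> t ^ 4 <= 2 ^ m -> b ^ 4 <= 2 ^ m.
Proof. by move=> hb; apply: leq_trans; rewrite leq_exp2r. Qed.

Lemma mainB m : forall k, k + m = n -> m != 3 -> Bk k ^ 4 <= 2 ^ m.
Proof.
elim/ltn_ind: m => m IH k hk h3.
case: (leqP m 8) => hm.
  case: m IH hk h3 hm => [|[|[|[|[|[|[|[|[|m]]]]]]]]] IH hk h3 hm //.
  - by apply: (pow_bound (t := 1)); [apply: b0; lia|].
  - by rewrite b1 ?exp4 //; lia.
  - by apply: (pow_bound (t := 1)); [apply: b2; lia|].
  - by apply: (pow_bound (t := 2)); [apply: b4; lia|].
  - by apply: (pow_bound (t := 1)); [apply: b5; lia|].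
  - by apply: (pow_bound (t := 1)); [apply: b6; lia|].
  - by apply: (pow_bound (t := 3)); [apply: b7; lia|].
  - by apply: (pow_bound (t := 4)); [apply: b8; lia|].
have hrec := Bk_rec2 K (_ : k + 3 < n).
have hx := IH (m - 4) (_ : m - 4 < m) (k + 4) (_ : k + 4 + (m - 4) = n) (_ : m - 4 != 3).
have hy := IH (m - 5) (_ : m - 5 < m) (k + 5) (_ : k + 5 + (m - 5) = n) (_ : m - 5 != 3).
have {hrec} hrec := hrec (ltac:(lia)).
have {hx} hx := hx (ltac:(lia)) (ltac:(lia)) (ltac:(lia)).
have {hy} hy := hy (ltac:(lia)) (ltac:(lia)) (ltac:(lia)).
have hp := pm (Bk (k + 4)) (Bk (k + 5)).
have hm' : Bk k ^ 4 <= (Bk (k + 4) + Bk (k + 5)) ^ 4 by rewrite leq_exp2r.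
have e4 : 2 ^ (m - 4) = 2 ^ (m - 5) * 2 by rewrite -expnSr; congr (2 ^ _); lia.
have e0 : 2 ^ m = 2 ^ (m - 5) * 32 by rewrite (_ : 32 = 2 ^ 5) // -expnD; congr (2 ^ _); lia.
rewrite e0; rewrite e4 in hx.
move: hm' hp hx hy.
move: (Bk k ^ 4) ((Bk (k + 4) + Bk (k + 5)) ^ 4) (Bk (k + 4) ^ 4) (Bk (k + 5) ^ 4) (2 ^ (m - 5)).
move=> a b c d P; lia.
Qed.

End Arith.

Lemma btilde_Bk (K : fieldType) n : btilde K (TP n) = Bk K n 0.
Proof.
rewrite btilde_bW /Bk; congr bW; apply/setP => x; by rewrite !inE.
Qed.

Lemma faces2_TP3 : #|faces (TP 3) 2| = 0.
Proof.
apply/eqP; rewrite cards_eq0; apply/eqP/setP => A; rewrite !inE.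
apply/negbTE/negP => /andP[/independentP Hi /cards2P[x [y [nxy hA]]]].
have := Hi x y; rewrite hA !inE !eqxx orbT => /(_ isT isT).
rewrite /TP nxy /=; move: (ltn_ord x) (ltn_ord y); lia.
Qed.

Lemma faces1_TP3 : 3 <= #|faces (TP 3) 1|.
Proof.
have Hc : #|[set [set x] | x : 'I_3]| = 3.
  by rewrite card_imset ?card_ord //; exact: set1_inj.
rewrite -{1}Hc; apply: subset_leq_card; apply/subsetP => A /imsetP[x _ ->].
rewrite !inE cards1 andbT; apply/independentP => u v; rewrite !inE.
by move=> /eqP-> /eqP->; exact: TPirr.
Qed.

Lemma faces0_TP3 : #|faces (TP 3) 0| = 1.
Proof. by rewrite card_faces cW0. Qed.

Theorem lemmaA20 (K : fieldType) :
  (forall n : nat, n != 3 -> (btilde K (TP n) ^ 4 <= 2 ^ n)%N)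
  /\ btilde K (TP 3) = 2%N.
Proof.
split.
  move=> n hn; rewrite btilde_Bk; exact: mainB.
apply/eqP; rewrite eqn_leq; apply/andP; split.
  by rewrite btilde_Bk; apply: b3.
rewrite /btilde.
rewrite (bigD1 (Ordinal (_ : 1 < #|'I_3|.+2))) //=.
apply: leq_trans (leq_addr _ _).
rewrite /red_betti mxrank_ker.
have h0 := rank_leq_col (bdry K (TP 3) 0).
have h1 := rank_leq_row (bdry K (TP 3) 1).
move: h0 h1; move: (\rank (bdry K (TP 3) 0)) (\rank (bdry K (TP 3) 1)) => r0 r1.
rewrite faces2_TP3 faces0_TP3.
have := faces1_TP3; lia.
Qed.
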